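(* Let $(\omega_t)_{t\ge1}$ be any sequence of $(0,1)$-valued random variables with each $\omega_t$ $\mathcal{F}_{t-1}$-measurable, and define the e-LORD testing levels recursively by $\alpha_1=\alpha\omega_1$ and, for $t\ge2$, $$\alpha_t=\omega_t\Big(\alpha-\sum_{j=1}^{t-1}\frac{\alpha_j}{R_{j-1}+1}\Big)(R_{t-1}+1).$$ Then for all $t\ge1$, $\alpha_t=\alpha\,(R_{t-1}+1)\,\omega_t\prod_{j=1}^{t-1}(1-\omega_j)$, each $\alpha_t$ is positive and $\mathcal{F}_{t-1}$-measurable, and $\sum_{j=1}^t\frac{\alpha_j}{R_{j-1}+1}=\alpha\big(1-\prod_{j=1}^t(1-\omega_j)\big)\le\alpha$. Consequently, if the e-values are valid ($\mathbb{E}[e_t\mid\mathcal{F}_{t-1}]\le1$ a.s. whenever $\theta_t=0$), then $\mathrm{FDR}(t)\le\alpha$ for all $t\ge1$.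
   Context: Let $\alpha\in(0,1)$ be a target level. Hypotheses are indexed by $t=1,2,\dots$; $\theta_t\in\{0,1\}$ is a fixed (non-random) indicator with $\theta_t=0$ iff the $t$-th null hypothesis is true. $e_1,e_2,\dots$ are nonnegative random variables (e-values). The decisions are $\delta_t=\mathbb{1}\{e_t\ge 1/\alpha_t\}$. Let $\mathcal{F}_t=\sigma(\delta_1,\dots,\delta_t)$, $\mathcal{F}_0$ trivial. $R_t=\sum_{j=1}^t\delta_j$, $R_0=0$. $\mathcal{H}_0(t)=\{j\le t:\theta_j=0\}$. $\mathrm{FDR}(t)=\mathbb{E}\big[\sum_{j\in\mathcal{H}_0(t)}\delta_j/(R_t\vee 1)\big]$. *)

(* Defs.v *)
From HB Require Import structures.
From mathcomp Require Import all_boot all_order all_algebra.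
From mathcomp Require Import all_classical all_reals all_analysis.

Set Implicit Arguments.
Unset Strict Implicit.
Unset Printing Implicit Defensive.

Import Order.TTheory GRing.Theory Num.Theory.
Local Open Scope classical_set_scope.
Local Open Scope ring_scope.

Section ELord.
Context {T : Type} {R : realType}.

Definition Rcount (delta : nat -> T -> bool) (t : nat) (x : T) : nat :=
  (\sum_(1 <= j < t.+1) nat_of_bool (delta j x))%N.

(* number of false discoveries among the first t hypotheses;
   theta j = false  <->  theta_j = 0  <-> the j-th null is true *)
Definition Vcount (theta : nat -> bool) (delta : nat -> T -> bool)
    (t : nat) (x : T) : nat :=
  (\sum_(1 <= j < t.+1 | ~~ theta j) nat_of_bool (delta j x))%N.

Definition fdp (theta : nat -> bool) (delta : nat -> T -> bool)
    (t : nat) (x : T) : R :=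
  (Vcount theta delta t x)%:R / (maxn (Rcount delta t x) 1)%:R.

Definition Fgen (delta : nat -> T -> bool) (t : nat) : set (set T) :=
  [set A | exists j, (1 <= j <= t)%N /\ A = [set x | delta j x]].

Definition Fsig (delta : nat -> T -> bool) (t : nat) : set (set T) :=
  <<s Fgen delta t >>.

Definition F_measurable (F : set (set T)) (f : T -> R) : Prop :=
  forall B : set R, measurable B -> F (f @^-1` B).

End ELord.

(* Main.v *)
Require Import Defs.
From HB Require Import structures.
From mathcomp Require Import all_boot all_order all_algebra.
From mathcomp Require Import all_classical all_reals all_analysis.
From mathcomp Require Import ring lra zify measurable_realfun.
Import Order.TTheory GRing.Theory Num.Theory.
Local Open Scope classical_set_scope.
Local Open Scope ring_scope.
Section Alg.
Context (R : realType) (a : R) (om al D : nat -> R).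
Hypothesis h1 : al 1%N = a * om 1%N.
Hypothesis hD0 : D 0%N = 1.
Hypothesis hD : forall t, D t != 0.
Hypothesis h2 : forall t, (2 <= t)%N ->
  al t = om t * (a - \sum_(1 <= j < t) al j / D j.-1) * D t.-1.

Lemma alt t : (1 <= t)%N -> al t = om t * (a - \sum_(1 <= j < t) al j / D j.-1) * D t.-1.
Proof.
case: t => // -[_|t _]; last exact: h2.
by rewrite big_geq // subr0 h1 hD0 mulr1 mulrC.
Qed.

Lemma Sform t : \sum_(1 <= j < t.+1) al j / D j.-1 = a * (1 - \prod_(1 <= j < t.+1) (1 - om j)).
Proof.
elim: t => [|t IH]; first by rewrite !big_geq // subrr mulr0.
rewrite big_nat_recr //= [in RHS]big_nat_recr //= IH alt //= IH.
rewrite -mulrA mulfV ?hD // mulr1; set p := \prod_(_ <= _ < _) _.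
ring.
Qed.

Lemma alform t : (1 <= t)%N -> al t = a * D t.-1 * om t * \prod_(1 <= j < t) (1 - om j).
Proof.
case: t => // t _; rewrite alt //= Sform; ring.
Qed.
End Alg.
Section G.
Local Set Implicit Arguments.
Context (d : measure_display) (T : measurableType d) (R : realType).
Variable (delta : nat -> T -> bool).

Lemma FmE t (f : T -> R) : F_measurable (Fsig delta t) f <->
  measurable_fun [set: g_sigma_algebraType (Fgen delta t)] f.
Proof.
split.
- by move=> H _ B mB; rewrite setTI; exact: H.
- by move=> H B mB; have := H measurableT B mB; rewrite setTI.
Qed.

Lemma Fsig_mono s t : (s <= t)%N -> Fsig delta s `<=` Fsig delta t.
Proof.
move=> st; apply: sub_sigma_algebra2 => A [j [/andP[j1 js] ->]].
by exists j; split => //; rewrite j1 (leq_trans js st).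
Qed.

Lemma Fm_mono s t (f : T -> R) : (s <= t)%N ->
  F_measurable (Fsig delta s) f -> F_measurable (Fsig delta t) f.
Proof. move=> st H B mB. have := H B mB. exact: (Fsig_mono st). Qed.

Lemma Fm_delta t j : (1 <= j <= t)%N ->
  F_measurable (Fsig delta t) (fun x => ((delta j x)%:R : R)).
Proof.
move=> jt; apply/FmE.
apply: (measurableT_comp (f := fun b : bool => (b%:R : R))) => //.
apply: (measurable_fun_bool true); rewrite setTI.
by apply: sub_sigma_algebra; exists j; split.
Qed.

Lemma msum_in d' (T' : measurableType d') (D : set T') (I : eqType) (s : seq I) (h : I -> T' -> R) :
  (forall i, i \in s -> measurable_fun D (h i)) ->
  measurable_fun D (fun x => \sum_(i <- s) h i x).
Proof.
elim: s => [mh|x y ih mh].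
  by under eq_fun do rewrite big_nil//=; exact: measurable_cst.
under eq_fun do rewrite big_cons//=; apply: measurable_realfun.measurable_funD => //.
- by apply: mh; rewrite mem_head.
- by apply: ih => n ny; apply: mh; rewrite inE orbC ny.
Qed.

Lemma Fm_Rcount t :
  F_measurable (Fsig delta t) (fun x => ((Rcount delta t x)%:R : R)).
Proof.
apply/FmE.
have -> : (fun x => ((Rcount delta t x)%:R : R)) =
   (fun x => \sum_(j <- index_iota 1 t.+1) ((delta j x)%:R : R)).
  by apply/funext => x; rewrite /Rcount natr_sum.
apply: msum_in => j; rewrite mem_index_iota ltnS => jt.
by apply/FmE; apply: Fm_delta.
Qed.

End G.
Section W.
Context (d : measure_display) (T : measurableType d) (R : realType).
Variable P : probability T R.

Lemma indic_int (A : set T) (g : T -> R) : measurable A ->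
  (\int[P]_x (\1_A x * g x)%:E = \int[P]_(x in A) (g x)%:E)%E.
Proof.
move=> mA; rewrite [RHS]integral_mkcond; apply: eq_integral => x _.
rewrite patchE indicE; case: (x \in A) => /=; by rewrite ?mul1r ?mul0r.
Qed.


Lemma count_bound (y : R) n : 0 <= y ->
  let c := \sum_(1 <= k < n.+1) (if k%:R <= y then 1 else 0 : R) in
  [/\ c <= y, c <= n%:R & (c = n%:R \/ y < c + 1)].
Proof.
move=> y0; elim: n => [|n [IH1 IH2 IH3]] /=.
  by rewrite big_geq //; split => //; left.
rewrite big_nat_recr //=.
set c := \sum_(_ <= _ < _) _ in IH1 IH2 IH3 *.
case: IH3 => [cn|yc].
- case: ifP => hy.
  + rewrite cn natr1; split => //; by [left].
  + rewrite addr0 cn; split => //; first by rewrite -cn.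
    * by rewrite ler_nat.
    * by right; rewrite natr1 ltNge hy.
- have -> : ((n.+1)%:R <= y) = false.
    apply/negbTE; rewrite -ltNge (lt_le_trans yc) //.
    by rewrite -natr1 lerD2r.
  rewrite addr0; split => //; first by rewrite (le_trans IH2) // ler_nat.
  by right.
Qed.

Lemma sum_indic_int (A : nat -> set T) (m : nat) (c : R) (g : T -> R) :
  (forall k, measurable (A k)) -> measurable_fun setT g -> (forall x, 0 <= g x) ->
  0 <= c ->
  (\int[P]_x ((c * \sum_(1 <= k < m) (\1_(A k) x : R)) * g x)%:E =
   \sum_(1 <= k < m) (c%:E * \int[P]_(x in A k) (g x)%:E))%E.
Proof.
move=> mA mg g0 c0.
rewrite (eq_integral (fun x => \sum_(k <- index_iota 1 m) (c%:E * (\1_(A k) x * g x)%:E))%E); last first.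
  move=> x _; rewrite -mulrA mulr_suml mulr_sumr sumEFin.
  by [].
rewrite ge0_integral_sum //; last first.
- move=> k x _; rewrite mule_ge0 // lee_fin mulr_ge0 //; by rewrite indicE.
- move=> k; rewrite (_ : (fun x => _) = EFin \o (fun x => c * (\1_(A k) x * g x))); last by apply/funext => x /=; rewrite EFinM.
  apply/measurable_EFinP.
  apply: measurable_realfun.measurable_funM; first exact: measurable_cst.
  apply: measurable_realfun.measurable_funM => //.
apply: eq_bigr => k _; rewrite ge0_integralZl_EFin //; last first.
- apply/measurable_EFinP; apply: measurable_realfun.measurable_funM => //.
- by move=> x _; rewrite lee_fin mulr_ge0 // indicE.
by rewrite indic_int.
Qed.

Lemma weighted (F : set (set T)) (f w : T -> R) :
  (forall A, F A -> measurable A) -> F setT ->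
  measurable_fun setT f -> (forall x, 0 <= f x) ->
  (forall A, F A -> (\int[P]_(x in A) (f x)%:E <= P A)%E) ->
  F_measurable F w -> (forall x, 0 <= w x <= 1) ->
  (\int[P]_x (w x * f x)%:E <= \int[P]_x (w x)%:E)%E.
Proof.
move=> FM FT mf f0 Hf Fw w01.
have mw : measurable_fun setT w.
  by move=> _ B mB; rewrite setTI; apply: FM; exact: Fw.
have w0 x : 0 <= w x by case/andP: (w01 x).
have w1 x : w x <= 1 by case/andP: (w01 x).
apply/lee_addgt0Pr => eps eps0.
pose n := (Num.truncn eps^-1).+1.
have n0 : (0 < n%:R :> R) by rewrite ltr0n.
have neps : n%:R^-1 < eps.
  rewrite -(invrK eps) ltf_pV2 ?posrE ?invr_gt0 //.
  exact: truncnS_gt.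
pose A k := [set x | k%:R <= n%:R * w x].
have FA k : F (A k).
  have -> : A k = w @^-1` `[k%:R / n%:R, +oo[.
    apply/funext => x; rewrite /A /preimage /= in_itv /= andbT.
    by rewrite ler_pdivrMr // mulrC.
  by apply: Fw; exact: measurable_itv.
have mA k : measurable (A k) by exact: FM.
pose wn (x : T) : R := n%:R^-1 * \sum_(1 <= k < n.+1) (\1_(A k) x : R).
have wnE x : \sum_(1 <= k < n.+1) (\1_(A k) x : R) =
    \sum_(1 <= k < n.+1) (if k%:R <= n%:R * w x then 1 else 0 : R).
  apply: eq_bigr => k _; rewrite indicE.
  case: ifP => h; [by rewrite mem_set | rewrite memNset //; by rewrite /A /= h].
have [wn_le w_le] : (forall x, wn x <= w x) /\ (forall x, w x <= wn x + n%:R^-1).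
  split => x; rewrite /wn wnE;
    have [c1 c2 c3] := @count_bound _ n (mulr_ge0 (ler0n _ n) (w0 x));
    set c := \sum_(_ <= _ < _) _ in c1 c2 c3 *.
  - by rewrite ler_pdivrMl.
  - rewrite -[X in _ + X]mulr1 -mulrDr ler_pdivlMl //; case: c3 => [cn|lt]; last by rewrite ltW.
    have : n%:R * w x <= n%:R * 1 by rewrite ler_wpM2l // ltW.
    rewrite cn; lra.
have wn0 x : 0 <= wn x.
  rewrite /wn; apply: mulr_ge0; first by rewrite invr_ge0 ltW.
  apply: sumr_ge0 => k _; by rewrite indicE.
have mwn : measurable_fun setT wn.
  apply: measurable_realfun.measurable_funM; first exact: measurable_cst.
  apply: measurable_sum => k; exact: measurable_realfun.measurable_indic.
have mEF (h : T -> R) : measurable_fun setT h -> measurable_fun setT (fun x => (h x)%:E).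
  by move=> mh; apply/measurable_EFinP.
have mwf : measurable_fun setT (fun x => w x * f x) by exact: measurable_funM.
have mwnf : measurable_fun setT (fun x => wn x * f x) by exact: measurable_funM.
have mnf : measurable_fun setT (fun x => n%:R^-1 * f x).
  by apply: measurable_funM => //; exact: measurable_cst.
have intf : (\int[P]_x (f x)%:E <= 1)%E.
  by rewrite -(probability_setT P); exact: Hf.
have step1 : (\int[P]_x (w x * f x)%:E <=
    \int[P]_x ((wn x * f x)%:E + (n%:R^-1 * f x)%:E))%E.
  apply: ge0_le_integral => //.
  - by move=> x _; rewrite lee_fin mulr_ge0.
  - by apply: mEF.
  - by apply: emeasurable_funD; apply: mEF.
  - move=> x _; rewrite -EFinD lee_fin -mulrDl ler_wpM2r //.
rewrite ge0_integralD // in step1; last 4 first.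
- by move=> x _; rewrite lee_fin mulr_ge0.
- by apply: mEF.
- by move=> x _; rewrite lee_fin mulr_ge0 // invr_ge0 ltW.
- by apply: mEF.
have ni0 : 0 <= n%:R^-1 :> R by rewrite invr_ge0 ltW.
have step2 : (\int[P]_x (wn x * f x)%:E <= \int[P]_x (wn x * 1)%:E)%E.
  rewrite /wn (sum_indic_int A n.+1 n%:R^-1 f mA mf f0 ni0).
  rewrite (sum_indic_int A n.+1 n%:R^-1 (fun=> 1) mA (measurable_cst _) (fun=> ler01) ni0).
  apply: lee_sum => k _; apply: lee_wpmul2l; first by rewrite lee_fin.
  rewrite (integral_cst P (mA k) 1) mul1e; exact: Hf.
have step3 : (\int[P]_x (wn x * 1)%:E <= \int[P]_x (w x)%:E)%E.
  apply: ge0_le_integral => //.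
  - by move=> x _; rewrite lee_fin mulr1.
  - by apply: mEF; apply: measurable_funM => //; exact: measurable_cst.
  - by apply: mEF.
  - by move=> x _; rewrite lee_fin mulr1.
have step4 : (\int[P]_x (n%:R^-1 * f x)%:E <= eps%:E)%E.
  under eq_integral do rewrite EFinM.
  rewrite ge0_integralZl_EFin //; try (by move=> x _; rewrite lee_fin); try (by apply: mEF).
  apply: (le_trans (lee_wpmul2l _ intf)); first by rewrite lee_fin invr_ge0 ltW.
  by rewrite mule1 lee_fin ltW.
apply: (le_trans step1); apply: leeD => //.
exact: le_trans step2 step3.
Qed.

End W.

Section H2.
Context (d : measure_display) (T : measurableType d) (R : realType).
Variable (delta : nat -> T -> bool).

Lemma Fsig_setT t : Fsig delta t setT.
Proof. by rewrite -setC0; apply: sigma_algebraC; exact: sigma_algebra0. Qed.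

Lemma FsubM t : (forall j, (1 <= j <= t)%N -> measurable [set x | delta j x]) ->
  Fsig delta t `<=` measurable.
Proof.
move=> H; apply: smallest_sub; first exact: sigma_algebra_measurable.
by move=> A [j [jt ->]]; exact: H.
Qed.

Lemma FmM t (f : T -> R) : Fsig delta t `<=` measurable ->
  F_measurable (Fsig delta t) f -> measurable_fun setT f.
Proof. by move=> sub H _ B mB; rewrite setTI; apply: sub; exact: H. Qed.

Lemma mnatfun (h : nat -> R) : measurable_fun setT h.
Proof. by []. Qed.

Lemma mRcount t : (forall j, (1 <= j <= t)%N -> measurable [set x | delta j x]) ->
  measurable_fun setT (Rcount delta t).
Proof.
elim: t => [|t IH] H.
  rewrite (_ : Rcount delta 0 = cst 0%N); first exact: measurable_cst.
  by apply/funext => x; rewrite /Rcount big_geq.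
rewrite (_ : Rcount delta t.+1 = fun x => (Rcount delta t x + nat_of_bool (delta t.+1 x))%N).
  apply: measurable_fun_addn.
    by apply: IH => j /andP[j1 jt]; apply: H; rewrite j1 ltnW.
  apply: (measurableT_comp (f := nat_of_bool)) => //.
  apply: (measurable_fun_bool true); rewrite setTI; apply: H.
  by rewrite leqnn.
by apply/funext => x; rewrite /Rcount big_nat_recr.
Qed.
End H2.

Theorem mainTheorem11 (d : measure_display) (T : measurableType d)
    (R : realType) (P : probability T R)
    (a : R) (theta : nat -> bool)
    (e omega alpha : nat -> T -> R) (delta : nat -> T -> bool) :
  0 < a < 1 ->
  (* e-values: nonnegative random variables *)
  (forall t, measurable_fun setT (e t)) ->
  (forall t x, 0 <= e t x) ->
  (* omega_t : (0,1)-valued random variables, F_{t-1}-measurable *)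
  (forall t, measurable_fun setT (omega t)) ->
  (forall t x, 0 < omega t x < 1) ->
  (forall t, (1 <= t)%N -> F_measurable (Fsig delta t.-1) (omega t)) ->
  (* decisions *)
  (forall t x, (1 <= t)%N -> delta t x = ((alpha t x)^-1 <= e t x)) ->
  (* e-LORD testing levels *)
  (forall x, alpha 1%N x = a * omega 1%N x) ->
  (forall t x, (2 <= t)%N ->
     alpha t x = omega t x
       * (a - \sum_(1 <= j < t) alpha j x / ((Rcount delta j.-1 x)%:R + 1))
       * ((Rcount delta t.-1 x)%:R + 1)) ->
  [/\ (forall t x, (1 <= t)%N ->
         alpha t x = a * ((Rcount delta t.-1 x)%:R + 1) * omega t x
                       * \prod_(1 <= j < t) (1 - omega j x)),
      (forall t, (1 <= t)%N ->
         (forall x, 0 < alpha t x) /\ F_measurable (Fsig delta t.-1) (alpha t)),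
      (forall t x, (1 <= t)%N ->
         \sum_(1 <= j < t.+1) alpha j x / ((Rcount delta j.-1 x)%:R + 1)
           = a * (1 - \prod_(1 <= j < t.+1) (1 - omega j x))
         /\ \sum_(1 <= j < t.+1) alpha j x / ((Rcount delta j.-1 x)%:R + 1)
           <= a)
    & (* validity: E[e_t | F_{t-1}] <= 1 a.s. for every null t, i.e.
         E[e_t 1_A] <= P(A) for all A in F_{t-1} *)
      ((forall t, (1 <= t)%N -> theta t = false ->
          forall A, Fsig delta t.-1 A ->
            (\int[P]_(x in A) (e t x)%:E <= P A)%E) ->
       forall t, (1 <= t)%N ->
         (\int[P]_x (fdp theta delta t x)%:E <= a%:E)%E)].
Proof.
move=> /andP[a0 a1] me e0 mom om01 Fom hdelta h1 h2.
have om0 j x : 0 < omega j x by case/andP: (om01 j x).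
have om1 j x : omega j x < 1 by case/andP: (om01 j x).
have Rc0 x : Rcount delta 0 x = 0%N by rewrite /Rcount big_geq.
have Dpos j x : 0 < (Rcount delta j x)%:R + 1 :> R.
  by have := ler0n R (Rcount delta j x); lra.
have P1 : forall t x, (1 <= t)%N ->
    alpha t x = a * ((Rcount delta t.-1 x)%:R + 1) * omega t x
                  * \prod_(1 <= j < t) (1 - omega j x).
  move=> t x ht.
  apply: (@alform R a (omega^~ x) (alpha^~ x) (fun j => (Rcount delta j x)%:R + 1)) => //.
  - by rewrite Rc0 add0r.
  - by move=> s hs; exact: h2.
have P3 : forall t x, (1 <= t)%N ->
    \sum_(1 <= j < t.+1) alpha j x / ((Rcount delta j.-1 x)%:R + 1)
      = a * (1 - \prod_(1 <= j < t.+1) (1 - omega j x)).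
  move=> t x _.
  apply: (@Sform R a (omega^~ x) (alpha^~ x) (fun j => (Rcount delta j x)%:R + 1)) => //.
  - by rewrite Rc0 add0r.
  - by move=> s hs; exact: h2.
have prpos t x : 0 < \prod_(1 <= j < t) (1 - omega j x).
  by apply: prodr_gt0 => j _; rewrite subr_gt0.
have prle1 t x : \prod_(1 <= j < t) (1 - omega j x) <= 1.
  apply: prodr_ile1 => j _; have := om0 j x; have := om1 j x; lra.
have Fprod t : (1 <= t)%N ->
    measurable_fun [set: g_sigma_algebraType (Fgen delta t.-1)]
      (fun x => \prod_(1 <= j < t) (1 - omega j x)).
  move=> ht; apply: measurable_prod => j; rewrite mem_index_iota => /andP[j1 jt].
  apply: measurable_funB; first exact: measurable_cst.
  have jt' : (j.-1 <= t.-1)%N.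
    by lia.
  apply/FmE; exact: (@Fm_mono _ T R delta j.-1 t.-1 (omega j) jt' (Fom j j1)).
have Fom' t : (1 <= t)%N ->
    measurable_fun [set: g_sigma_algebraType (Fgen delta t.-1)] (omega t).
  by move=> ht; apply/FmE; exact: Fom.
have P2 : forall t, (1 <= t)%N ->
    (forall x, 0 < alpha t x) /\ F_measurable (Fsig delta t.-1) (alpha t).
  move=> t ht; split.
    by move=> x; rewrite P1 // !mulr_gt0.
  have -> : alpha t = fun x => a * ((Rcount delta t.-1 x)%:R + 1) * omega t x
                  * \prod_(1 <= j < t) (1 - omega j x).
    by apply/funext => x; rewrite P1.
  apply/FmE; apply: measurable_funM; last exact: Fprod.
  apply: measurable_funM; last exact: Fom'.
  apply: measurable_funM; first exact: measurable_cst.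
  apply: measurable_funD; last exact: measurable_cst.
  by apply/FmE; exact: (@Fm_Rcount _ T R delta t.-1).
have P3le t x : (1 <= t)%N ->
    \sum_(1 <= j < t.+1) alpha j x / ((Rcount delta j.-1 x)%:R + 1) <= a.
  move=> ht; rewrite P3 //; have := prpos t.+1 x; nra.
split => //.
  by move=> t x ht; split; [exact: P3|exact: P3le].
move=> Hval t ht.
have mdelta : forall n j, (1 <= j <= n)%N -> measurable [set x | delta j x].
  elim=> [|n IH] j /andP[j1 jn]; first by lia.
  have [jn'|jn'] := boolP (j <= n)%N; first by apply: IH; rewrite j1.
  have -> : j = n.+1 by lia.
  have sub := @FsubM _ T delta n IH.
  have ma : measurable_fun setT (alpha n.+1) := @FmM _ T R delta n (alpha n.+1) sub (P2 n.+1 isT).2.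
  have -> : [set x | delta n.+1 x] =
      (fun x => alpha n.+1 x * e n.+1 x) @^-1` `[1, +oo[.
    apply/funext => x; rewrite /preimage /= in_itv /= andbT hdelta //.
    by rewrite -[(alpha _ x)^-1]div1r ler_pdivrMr ?((P2 n.+1 isT).1 x) // mulrC.
  rewrite -[X in measurable X]setTI.
  apply: (measurable_funM ma (me n.+1)) => //; exact: measurable_itv.
have Fsub j : Fsig delta j `<=` measurable := @FsubM _ T delta j (mdelta j).
pose W j x := alpha j x / ((Rcount delta j.-1 x)%:R + 1).
have WE j x : (1 <= j)%N -> W j x = a * omega j x * \prod_(1 <= i < j) (1 - omega i x).
  move=> hj; rewrite /W P1 //; have hD := Dpos j.-1 x.
  field; by rewrite gt_eqF.
have W01 j x : (1 <= j)%N -> 0 <= W j x <= 1.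
  move=> hj; rewrite WE //; apply/andP; split.
    by rewrite !mulr_ge0 // ltW.
  have hp := prle1 j x; have hp0 := prpos j x.
  have hw := om1 j x; have hw0 := om0 j x.
  have haw : a * omega j x <= 1 by nra.
  have haw0 : 0 <= a * omega j x by nra.
  set p := \prod_(_ <= _ < _) _ in hp hp0 *.
  nra.
have FW j : (1 <= j)%N -> F_measurable (Fsig delta j.-1) (W j).
  move=> hj; have -> : W j = fun x => a * omega j x * \prod_(1 <= i < j) (1 - omega i x).
    by apply/funext => x; rewrite WE.
  apply/FmE; apply: measurable_funM; last exact: Fprod.
  apply: measurable_funM; last exact: Fom'.
  exact: measurable_cst.
have mW j : (1 <= j)%N -> measurable_fun setT (W j).
  by move=> hj; exact: (@FmM _ T R delta j.-1 (W j) (Fsub _) (FW j hj)).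
have RcS j x : (1 <= j)%N ->
    Rcount delta j x = (Rcount delta j.-1 x + nat_of_bool (delta j x))%N.
  by case: j => // j _; rewrite /Rcount big_nat_recr.
have Rcmono j x : (j <= t)%N -> (Rcount delta j x <= Rcount delta t x)%N.
  move=> jt; rewrite /Rcount [X in (_ <= X)%N](big_cat_nat _ (n := j.+1)) //=; exact: leq_addr.
have fdp0 x : 0 <= fdp (R := R) theta delta t x by rewrite /fdp divr_ge0.
have fdp_le x : fdp theta delta t x <=
    \sum_(1 <= j < t.+1) (if ~~ theta j then W j x * e j x else 0).
  rewrite /fdp /Vcount natr_sum mulr_suml big_mkcond /= big_seq [X in _ <= X]big_seq.
  apply: ler_sum => j; rewrite mem_index_iota => /andP[j1 jt].
  case: (theta j) => /=; first by [].
  have hW := W01 j x j1.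
  case hd: (delta j x) => /=; last first.
    by rewrite mul0r mulr_ge0 //; case/andP: hW.
  have hae : 1 <= alpha j x * e j x.
    move: hd; rewrite hdelta // => h.
    have ha := (P2 j j1).1 x.
    by rewrite -(mulfV (negbT (gt_eqF ha))) ler_pM2l.
  have hD := Dpos j.-1 x.
  have hM : (Rcount delta j.-1 x)%:R + 1 <= (maxn (Rcount delta t x) 1)%:R :> R.
    rewrite natr1 ler_nat; apply: (leq_trans _ (leq_maxl _ _)).
    have := RcS j x j1; rewrite hd /= addn1 => <-.
    by apply: Rcmono; rewrite -ltnS.
  rewrite mul1r /W mulrAC.
  apply: (@le_trans _ _ ((Rcount delta j.-1 x)%:R + 1)^-1).
    by rewrite lef_pV2 ?posrE // (lt_le_trans hD hM).
  by rewrite -[X in X <= _]mul1r ler_pM2r ?invr_gt0.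
have mfdp : measurable_fun setT (fdp (R := R) theta delta t).
  suff H : measurable_fun setT (fun x =>
      (\sum_(j <- index_iota 1 t.+1)
          (if ~~ theta j then ((delta j x)%:R : R) else 0)) *
      ((maxn (Rcount delta t x) 1)%:R)^-1).
    by apply: (eq_measurable_fun _ _ H) => x _; rewrite /fdp /Vcount natr_sum [in RHS]big_mkcond.
  apply: measurable_funM.
    apply: msum_in => j; rewrite mem_index_iota => /andP[j1 jt].
    apply: (measurableT_comp (f := fun b : bool => if ~~ theta j then (b%:R : R) else 0)) => //.
    apply: (measurable_fun_bool true); rewrite setTI; apply: (mdelta t).
    by rewrite j1 -ltnS.
  apply: (measurableT_comp (f := fun n : nat => ((maxn n 1)%:R : R)^-1)) => //.
  exact: (@mRcount _ T delta t (mdelta t)).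
have mWe j : (1 <= j)%N -> measurable_fun setT (fun x => W j x * e j x).
  by move=> hj; apply: measurable_funM; [exact: mW|exact: me].
pose g j x := if (0 < j)%N && ~~ theta j then W j x * e j x else 0.
have g0 j x : 0 <= g j x.
  rewrite /g; case: j => [|j] //=; case: (theta j.+1) => //=.
  by case/andP: (W01 j.+1 x isT) => ? _; rewrite mulr_ge0.
have mg j : measurable_fun setT (fun x => (g j x)%:E).
  apply/measurable_EFinP; rewrite /g; case: j => [|j] /=; first exact: measurable_cst.
  case: (theta j.+1) => /=; first exact: measurable_cst.
  exact: mWe.
pose Wp j x := if (0 < j)%N then W j x else 0.
have Wp0 j x : 0 <= Wp j x.
  by rewrite /Wp; case: j => [|j] //=; case/andP: (W01 j.+1 x isT).
have mWp j : measurable_fun setT (fun x => (Wp j x)%:E).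
  apply/measurable_EFinP; rewrite /Wp; case: j => [|j] /=; first exact: measurable_cst.
  exact: mW.
apply: (@le_trans _ _ (\int[P]_x (\sum_(j <- index_iota 1 t.+1) (g j x)%:E))%E).
  apply: ge0_le_integral => //.
  - by move=> x _; rewrite lee_fin.
  - by apply/measurable_EFinP.
  - by apply: emeasurable_sum => j; exact: mg.
  - move=> x _; rewrite sumEFin lee_fin (le_trans (fdp_le x)) //.
    rewrite le_eqVlt; apply/orP; left; apply/eqP.
    by apply: eq_big_nat => j /andP[j1 _]; rewrite /g j1.
rewrite ge0_integral_sum //; last by move=> j x _; rewrite lee_fin.
apply: (@le_trans _ _ (\sum_(j <- index_iota 1 t.+1) \int[P]_x (Wp j x)%:E)%E).
  rewrite big_seq [X in (_ <= X)%E]big_seq; apply: lee_sum => j.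
  rewrite mem_index_iota => /andP[j1 jt].
  rewrite /g /Wp j1 /=; case htj: (theta j) => /=.
    rewrite integral0_eq //; apply: integral_ge0 => x _.
    by rewrite lee_fin; case/andP: (W01 j x j1).
  apply: (@weighted _ T R P (Fsig delta j.-1) (e j) (W j)) => //.
  - exact: Fsub.
  - exact: Fsig_setT.
  - by move=> A hA; apply: Hval.
  - exact: FW.
  - by move=> x; exact: W01.
rewrite -ge0_integral_sum //; last by move=> j x _; rewrite lee_fin.
apply: (@le_trans _ _ (\int[P]_x (cst a%:E) x)%E).
  apply: ge0_le_integral => //.
  - by move=> x _; rewrite sume_ge0 // => j _; rewrite lee_fin.
  - by apply: emeasurable_sum => j; exact: mWp.
  - move=> x _; rewrite sumEFin lee_fin /=.
    rewrite (eq_big_nat _ _ (F2 := fun j => alpha j x / ((Rcount delta j.-1 x)%:R + 1))).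
      exact: P3le.
    by move=> j /andP[j1 _]; rewrite /Wp j1.
rewrite integral_cst //.
apply: (le_trans (lee_wpmul2l _ (probability_le1 P measurableT))); first by rewrite lee_fin ltW.
by rewrite mule1.
Qed.
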